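(* Let $b>0$ be irrational. Then there exist a strictly increasing sequence $(n_p)_{p\ge1}$ in $\mathbb N$ and a sequence $\gamma=(\gamma_n)_{n\ge1}$ of real numbers with $\gamma_{n_p}>0$ for all $p\ge1$, $\gamma_n=0$ for $n\notin J:=\{n_p:p\ge1\}$, $\sum_{n\ge1}n\gamma_n<\infty$, such that $$\sum_{p\ge1}n_p^3\gamma_{n_p}=\infty\qquad\text{and}\qquad \omega_{n_p}(\gamma)\in b\mathbb Z\ \ \forall p\ge1,$$ where $\omega_n(\gamma):=n^2-2\sum_{k=1}^nk\gamma_k-2n\sum_{k>n}\gamma_k$. Consequently every $u_0$ in the (nonempty) set $\mathrm{Iso}_\gamma:=\{u\in L^2_{r,0}:\gamma_n(u)=\gamma_n\ \forall n\ge1\}$ does not belong to $H^1_{r,0}$, and the solution $t\mapsto\mathcal S(t)u_0$ of the BO equation is periodic in time with period $T=2\pi/b$; thus $\mathrm{Iso}_\gamma$ is entirely filled with $T$-periodic solutions that are not finite gap solutions.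
   Context: $\mathbb T=\mathbb R/2\pi\mathbb Z$. For $s\in\mathbb R$, $H^s_{r,0}$ is the Sobolev space of real-valued distributions on $\mathbb T$ of $H^s$-regularity with zero mean; $L^2_{r,0}=H^0_{r,0}$. The Benjamin–Ono (BO) equation is $\partial_tu=H\partial_x^2u-\partial_x(u^2)$, $H$ the Hilbert transform (Fourier multiplier $-i\,\mathrm{sign}(n)$, zero at $n=0$). For $\sigma\in\mathbb R$, $h^\sigma_+$ is the space of complex sequences $(z_n)_{n\ge1}$ with $\sum n^{2\sigma}|z_n|^2<\infty$. Known facts taken as given: for every $s>-1/2$ the BO equation is globally well posed in $H^s_{r,0}$ with continuous solution map $\mathcal S(t)$; there is a map $\Phi:u\mapsto(\zeta_n(u))_{n\ge1}$ which for every $s>-1/2$ is a homeomorphism $H^s_{r,0}\to h^{s+1/2}_+$ (so $u\in H^s_{r,0}$ iff $\Phi(u)\in h^{s+1/2}_+$), with $\zeta_n(\mathcal S(t)u)=e^{i\omega_nt}\zeta_n(u)$, $\omega_n=n^2-2\sum_{k=1}^nk|\zeta_k(u)|^2-2n\sum_{k>n}|\zeta_k(u)|^2$. The actions are $\gamma_n(u):=|\zeta_n(u)|^2$. A finite gap solution is one whose initial datum $u_0$ has $\zeta_n(u_0)=0$ for all sufficiently large $n$. *)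

(* Defs.v *)
From Stdlib Require Import Reals Lra ZArith.
From Coquelicot Require Import Coquelicot.
Open Scope R_scope.

(* Sequences indexed by n >= 1 are modelled as functions nat -> _ whose
   value at index 0 is irrelevant (we only ever use indices n >= 1). *)

Definition irrational (b : R) : Prop :=
  ~ exists (p q : Z), q <> 0%Z /\ b = IZR p / IZR q.

Definition omega (gamma : nat -> R) (n : nat) : R :=
  INR n ^ 2
  - 2 * sum_n_m (fun k => INR k * gamma k) 1 n
  - 2 * INR n * Series (fun j => gamma (n + 1 + j)%nat).

(* Birkhoff coordinates (zeta_n)_{n>=1}, complex valued. *)
Definition actions (zeta : nat -> C) (n : nat) : R := (Cmod (zeta n)) ^ 2.

(* zeta in h^sigma_+  :  sum_{n>=1} n^{2 sigma} |zeta_n|^2 < oo,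
   for sigma = 1/2 (i.e. u in L^2_{r,0}) and sigma = 3/2 (u in H^1_{r,0}). *)
Definition in_h_half (zeta : nat -> C) : Prop :=
  ex_series (fun n => INR n * actions zeta n).
Definition in_h_3half (zeta : nat -> C) : Prop :=
  ex_series (fun n => INR n ^ 3 * actions zeta n).

(* BO flow in Birkhoff coordinates:
   zeta_n(S(t)u) = e^{i omega_n t} zeta_n(u), omega_n computed from the actions. *)
Definition BO_flow (zeta : nat -> C) (t : R) (n : nat) : C :=
  Cmult (cos (omega (actions zeta) n * t), sin (omega (actions zeta) n * t)) (zeta n).

Definition finite_gap (zeta : nat -> C) : Prop :=
  exists N : nat, forall n : nat, (N <= n)%nat -> zeta n = 0%C.

Definition Iso (gamma : nat -> R) (zeta : nat -> C) : Prop :=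
  in_h_half zeta /\ forall n : nat, (1 <= n)%nat -> actions zeta n = gamma n.

(* Main.v *)
Require Import Defs.
From Stdlib Require Import Reals Lra Lia ZArith Classical ClassicalEpsilon.
From Coquelicot Require Import Coquelicot.
Open Scope R_scope.

Lemma php : forall K (f : nat -> nat), (forall i, (i <= K)%nat -> (f i < K)%nat) ->
  exists i j, (i < j)%nat /\ (j <= K)%nat /\ f i = f j.
Proof.
  induction K as [|K IH]; intros f Hf.
  - specialize (Hf 0%nat (le_n 0)); lia.
  - destruct (classic (exists i, (i <= K)%nat /\ f i = f (S K))) as [[i [Hi Hei]]|Hno].
    + exists i, (S K); repeat split; lia.
    + set (g := fun i => if Nat.eqb (f i) K then f (S K) else f i).
      assert (Hg : forall i, (i <= K)%nat -> (g i < K)%nat).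
      { intros i Hi. unfold g. destruct (Nat.eqb_spec (f i) K) as [E|E].
        - assert (f (S K) <> K) by (intro E2; apply Hno; exists i; split; lia).
          specialize (Hf (S K) (le_n _)). lia.
        - specialize (Hf i ltac:(lia)). lia. }
      destruct (IH g Hg) as [i [j [Hij [Hj Heq]]]].
      unfold g in Heq.
      destruct (Nat.eqb_spec (f i) K) as [Ei|Ei]; destruct (Nat.eqb_spec (f j) K) as [Ej|Ej].
      * exists i, j; repeat split; lia.
      * exfalso; apply Hno; exists j; split; [lia|auto].
      * exfalso; apply Hno; exists i; split; [lia|auto].
      * exists i, j; repeat split; lia.
Qed.

Definition fr (t : R) : R := t - IZR (up t - 1).

Lemma fr_bounds : forall t, 0 <= fr t < 1.
Proof.
  intro t. unfold fr. destruct (archimed t) as [H1 H2]. rewrite minus_IZR. simpl. lra.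
Qed.

Lemma rphp : forall (K : nat) (s : nat -> R), (1 <= K)%nat ->
  (forall i, (i <= K)%nat -> 0 <= s i < 1) ->
  exists i j, (i < j)%nat /\ (j <= K)%nat /\ Rabs (s j - s i) < / INR K.
Proof.
  intros K s HK Hs.
  set (f := fun i => Z.to_nat (up (INR K * s i) - 1)).
  assert (HKp : 0 < INR K) by (apply lt_0_INR; lia).
  assert (Hu : forall i, (i <= K)%nat ->
     (0 <= up (INR K * s i) - 1)%Z /\ (up (INR K * s i) - 1 < Z.of_nat K)%Z).
  { intros i Hi. destruct (Hs i Hi) as [A B].
    destruct (archimed (INR K * s i)) as [H1 H2].
    assert (0 <= INR K * s i) by nra.
    assert (INR K * s i < INR K) by nra.
    split.
    - assert (0 < up (INR K * s i))%Z by (apply lt_IZR; simpl; lra). lia.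
    - assert (up (INR K * s i) - 1 < Z.of_nat K)%Z; [|lia].
      apply lt_IZR. rewrite minus_IZR, <- INR_IZR_INZ. simpl. lra. }
  assert (Hf : forall i, (i <= K)%nat -> (f i < K)%nat).
  { intros i Hi. unfold f. destruct (Hu i Hi). lia. }
  destruct (php K f Hf) as [i [j [Hij [Hj Heq]]]].
  exists i, j. repeat split; auto.
  unfold f in Heq. destruct (Hu i ltac:(lia)) as [Ai Bi]. destruct (Hu j Hj) as [Aj Bj].
  assert (E : up (INR K * s i) = up (INR K * s j)) by lia.
  destruct (archimed (INR K * s i)) as [H1 H2].
  destruct (archimed (INR K * s j)) as [H3 H4].
  rewrite E in H1, H2.
  assert (Rabs (INR K * s j - INR K * s i) < 1) by (apply Rabs_def1; lra).
  replace (s j - s i) with (/ INR K * (INR K * s j - INR K * s i)) by (field; lra).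
  rewrite Rabs_mult, Rabs_right by (left; apply Rinv_0_lt_compat; lra).
  assert (0 < / INR K) by (apply Rinv_0_lt_compat; lra).
  nra.
Qed.

Lemma dirichlet : forall (x d : R), 0 < d ->
  exists (m : nat) (z : Z), (1 <= m)%nat /\ Rabs (INR m * x - IZR z) < d.
Proof.
  intros x d Hd. destruct (archimed_cor1 d Hd) as [K [HK1 HK2]].
  destruct (rphp K (fun i => fr (INR i * x)) ltac:(lia) (fun i _ => fr_bounds _))
    as [i [j [Hij [Hj Habs]]]].
  exists (j - i)%nat, ((up (INR j * x) - 1) - (up (INR i * x) - 1))%Z.
  split; [lia|].
  rewrite minus_INR by lia. rewrite minus_IZR.
  unfold fr in Habs.
  replace ((INR j - INR i) * x - (IZR (up (INR j * x) - 1) - IZR (up (INR i * x) - 1)))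
    with (INR j * x - IZR (up (INR j * x) - 1) - (INR i * x - IZR (up (INR i * x) - 1))) by ring.
  lra.
Qed.

Fixpoint rs (f : nat -> nat) (k d : nat) : nat :=
  match d with 0 => 0%nat | S d' => (rs f k d' + f (k + d')%nat)%nat end.
Fixpoint rsR (f : nat -> R) (k d : nat) : R :=
  match d with 0 => 0 | S d' => rsR f k d' + f (k + d')%nat end.

Lemma rs_split : forall f k d, rs f 0 (k + d) = (rs f 0 k + rs f k d)%nat.
Proof. intros f k d; induction d as [|d IH]; simpl.
  - rewrite Nat.add_0_r; lia.
  - rewrite Nat.add_succ_r. simpl. rewrite IH. lia. Qed.
Lemma rsR_split : forall f k d, rsR f 0 (k + d) = rsR f 0 k + rsR f k d.
Proof. intros f k d; induction d as [|d IH]; simpl.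
  - rewrite Nat.add_0_r; lra.
  - rewrite Nat.add_succ_r. simpl. rewrite IH. lra. Qed.
Lemma rs_ext : forall f g k d, (forall i, (k <= i < k + d)%nat -> f i = g i) -> rs f k d = rs g k d.
Proof. intros f g k d H; induction d as [|d IH]; simpl; auto.
  rewrite IH by (intros; apply H; lia). rewrite H by lia. auto. Qed.
Lemma rs_pos : forall f k d L, (1 <= d)%nat -> (forall i, (i <= L)%nat -> (1 <= f i)%nat) ->
  (k + d <= S L)%nat -> (1 <= rs f k d)%nat.
Proof. intros f k d L Hd Hf HL. destruct d as [|d]; [lia|]. simpl.
  specialize (Hf (k + d)%nat ltac:(lia)). lia. Qed.

Lemma build : forall (x eta : R), 0 < eta -> forall L, exists m : nat -> nat,
  m 0%nat = 1%nat /\ (forall j, (j <= L)%nat -> (1 <= m j)%nat) /\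
  (forall j, (1 <= j <= L)%nat -> exists z : Z,
      Rabs (INR (m j) * x - IZR z) * (2 * INR (rs m 0 j)) < eta).
Proof.
  intros x eta He L. induction L as [|L IH].
  - exists (fun _ => 1%nat). repeat split; intros; try lia.
  - destruct IH as [m [H0 [H1 H2]]].
    assert (Hpos : (1 <= rs m 0 (S L))%nat).
    { apply (rs_pos m 0 (S L) L); auto; lia. }
    assert (HP : 0 < INR (rs m 0 (S L))) by (apply lt_0_INR; lia).
    destruct (dirichlet x (eta / (2 * INR (rs m 0 (S L))))) as [m' [z [Hm' Hz]]].
    { apply Rdiv_lt_0_compat; lra. }
    exists (fun i => if Nat.eqb i (S L) then m' else m i).
    assert (Hext : forall j, (j <= S L)%nat ->
      rs (fun i => if Nat.eqb i (S L) then m' else m i) 0 j = rs m 0 j).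
    { intros j Hj. apply rs_ext. intros i Hi. destruct (Nat.eqb_spec i (S L)); [lia|auto]. }
    repeat split.
    + simpl. auto.
    + intros j Hj. destruct (Nat.eqb_spec j (S L)); auto. apply H1; lia.
    + intros j Hj. rewrite Hext by lia. destruct (Nat.eqb_spec j (S L)) as [E|E].
      * subst j. exists z. 
        apply (Rmult_lt_compat_r (2 * INR (rs m 0 (S L)))) in Hz; [|lra].
        unfold Rdiv in Hz. rewrite Rmult_assoc, Rinv_l in Hz by lra. lra.
      * apply H2; lia.
Qed.

Lemma cross : forall (x eta : R) (L : nat) (m : nat -> nat), 0 < eta ->
  m 0%nat = 1%nat ->
  (forall j, (1 <= j <= L)%nat -> exists z : Z,
      Rabs (INR (m j) * x - IZR z) * (2 * INR (rs m 0 j)) < eta) ->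
  forall k d, (k + d <= S L)%nat -> exists Z : Z,
    Rabs (INR (rs m k d) ^ 2 * x - rsR (fun i => INR (m i) ^ 2 * x) k d - IZR Z) <= INR d * eta.
Proof.
  intros x eta L m He H0 H2 k d. induction d as [|d IH]; intro Hkd.
  - exists 0%Z. simpl. replace (0 * (0 * 1) * x - 0 - 0) with 0 by ring.
    rewrite Rabs_R0. lra.
  - destruct IH as [Z HZ]; [lia|].
    set (g := fun i => INR (m i) ^ 2 * x) in *.
    change (rs m k (S d)) with (rs m k d + m (k + d))%nat.
    change (rsR g k (S d)) with (rsR g k d + g (k + d)%nat).
    set (T := rs m k d) in *. set (l := (k + d)%nat).
    set (D := rsR g k d) in *.
    assert (Hg : g l = INR (m l) ^ 2 * x) by reflexivity.
    rewrite Hg, plus_INR.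
    destruct d as [|d'].
    + exists Z. assert (HT : T = 0%nat) by reflexivity.
      assert (HD : D = 0) by reflexivity.
      rewrite HT, HD in *. simpl INR in *.
      replace ((0 + INR (m l)) ^ 2 * x - (0 + INR (m l) ^ 2 * x) - IZR Z)
        with (0 ^ 2 * x - 0 - IZR Z) by ring. lra.
    + assert (Hl : (1 <= l <= L)%nat) by (unfold l; lia).
      destruct (H2 l Hl) as [z Hz].
      exists (Z + 2 * Z.of_nat T * z)%Z.
      assert (HTS : INR T <= INR (rs m 0 l)).
      { apply le_INR. unfold l. rewrite rs_split. unfold T. lia. }
      assert (HT0 : 0 <= INR T) by apply pos_INR.
      rewrite plus_IZR, mult_IZR, mult_IZR, <- INR_IZR_INZ.
      set (e := INR (m l) * x - IZR z) in *.
      replace ((INR T + INR (m l)) ^ 2 * x - (D + INR (m l) ^ 2 * x) - (IZR Z + IZR 2 * INR T * IZR z))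
        with ((INR T ^ 2 * x - D - IZR Z) + 2 * INR T * e) by (unfold e; simpl; ring).
      eapply Rle_trans; [apply Rabs_triang|].
      rewrite Rabs_mult, Rabs_mult, (Rabs_right 2) by lra. rewrite (Rabs_right (INR T)) by lra.
      assert (Rabs e * (2 * INR T) <= Rabs e * (2 * INR (rs m 0 l))).
      { apply Rmult_le_compat_l; [apply Rabs_pos|lra]. }
      rewrite (S_INR (S d')). nra.
Qed.

Lemma HL : forall (x eps : R), 0 < eps ->
  exists (n : nat) (z : Z), (1 <= n)%nat /\ Rabs (INR n ^ 2 * x - IZR z) < eps.
Proof.
  intros x eps He.
  destruct (archimed_cor1 (eps / 2)) as [K [HK1 HK2]]; [lra|].
  assert (HKp : 0 < INR K) by (apply lt_0_INR; lia).
  set (eta := eps / (2 * INR K)).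
  assert (Heta : 0 < eta) by (unfold eta; apply Rdiv_lt_0_compat; lra).
  destruct (build x eta Heta K) as [m [H0 [H1 H2]]].
  set (g := fun i => INR (m i) ^ 2 * x).
  destruct (rphp K (fun i => fr (rsR g 0 i)) ltac:(lia) (fun i _ => fr_bounds _))
    as [i [j [Hij [Hj Habs]]]].
  set (d := (j - i)%nat).
  assert (Ej : j = (i + d)%nat) by (unfold d; lia).
  destruct (cross x eta K m Heta H0 H2 i d ltac:(lia)) as [Z HZ].
  exists (rs m i d), (Z + ((up (rsR g 0 j) - 1) - (up (rsR g 0 i) - 1)))%Z.
  split.
  { apply (rs_pos m i d K); auto; lia. }
  unfold fr in Habs. rewrite Ej, rsR_split in Habs. rewrite Ej.
  rewrite plus_IZR, minus_IZR.
  fold g in HZ.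
  set (A := IZR (up (rsR g 0 (i + d)) - 1)) in *.
  set (B := IZR (up (rsR g 0 i) - 1)) in *.
  replace (INR (rs m i d) ^ 2 * x - (IZR Z + (A - B)))
    with ((INR (rs m i d) ^ 2 * x - rsR g i d - IZR Z) + (rsR g 0 i + rsR g i d - A - (rsR g 0 i - B))) by ring.
  eapply Rle_lt_trans; [apply Rabs_triang|].
  assert (INR d <= INR K) by (apply le_INR; unfold d; lia).
  assert (INR d * eta <= eps / 2).
  { unfold eta. apply (Rle_trans _ (INR K * (eps / (2 * INR K)))).
    - apply Rmult_le_compat_r; [left; apply Rdiv_lt_0_compat; lra|auto].
    - right. field. lra. }
  unfold A; rewrite rsR_split. lra.
Qed.

Lemma min_cross : forall (P : nat -> Prop) K, P K -> ~ P 0%nat -> exists k, ~ P k /\ P (S k).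
Proof.
  intros P K. induction K as [|K IH]; intros HK H0; [contradiction|].
  destruct (classic (P K)) as [HPK|HPK]; [apply IH; auto|].
  exists K; auto.
Qed.

Lemma cross_sq : forall y, 0 < y -> exists k : nat, INR k ^ 2 * y < 1 /\ 1 <= INR (S k) ^ 2 * y.
Proof.
  intros y Hy. destruct (archimed_cor1 y Hy) as [K [HK1 HK2]].
  assert (HKp : 0 < INR K) by (apply lt_0_INR; lia).
  assert (H1K : 1 <= INR K) by (apply (le_INR 1); lia).
  assert (1 < INR K * y).
  { apply (Rmult_lt_compat_l (INR K)) in HK1; auto. rewrite Rinv_r in HK1 by lra. lra. }
  destruct (min_cross (fun k => 1 <= INR k ^ 2 * y) K) as [k [A B]].
  - simpl. nra.
  - simpl. lra.
  - exists k. split; auto. lra.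
Qed.

Lemma Key : forall x, (forall q p : Z, q <> 0%Z -> IZR q * x <> IZR p) ->
  forall (v : R) (N : nat), 0 <= v < 1 ->
  exists (n : nat) (z : Z), (N < n)%nat /\ v < INR n ^ 2 * x - IZR z < 1.
Proof.
  intros x Hirr v N Hv.
  set (h := 1 - v).
  assert (Hh : 0 < h <= 1) by (unfold h; lra).
  assert (HN : 0 < INR (S N)) by (apply lt_0_INR; lia).
  set (eps := Rmin (h * h / 9) (/ (INR (S N) * INR (S N)))).
  assert (Heps : 0 < eps).
  { unfold eps. apply Rmin_pos. nra. apply Rinv_0_lt_compat; nra. }
  assert (He1 : eps <= h * h / 9) by apply Rmin_l.
  assert (He2 : eps * (INR (S N) * INR (S N)) <= 1).
  { assert (eps <= / (INR (S N) * INR (S N))) by apply Rmin_r.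
    apply (Rmult_le_compat_r (INR (S N) * INR (S N))) in H; [|nra].
    rewrite Rinv_l in H; nra. }
  destruct (HL x eps Heps) as [m [z0 [Hm Hz0]]].
  assert (Hmp : 1 <= INR m) by (apply (le_INR 1); lia).
  set (y := INR m ^ 2 * x - IZR z0) in *.
  assert (Hy0 : y <> 0).
  { intro E. apply (Hirr (Z.of_nat (m * m)) z0). lia.
    rewrite <- INR_IZR_INZ, mult_INR. unfold y in E. simpl in E. lra. }
  apply Rabs_def2 in Hz0. destruct Hz0 as [Hza Hzb].
  destruct (Rlt_or_le 0 y) as [Hyp|Hyn].
  - destruct (cross_sq y Hyp) as [k [A B]].
    exists (k * m)%nat, (Z.of_nat (k * k) * z0)%Z.
    assert (Hk : 0 <= INR k) by apply pos_INR.
    rewrite S_INR in B.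
    assert (Hbd : (2 * INR k + 1) * y < h).
    { assert (((2 * INR k + 1) * y) ^ 2 < 9 * y).
      { assert (INR k * y * y <= y).
        { destruct (Rle_lt_dec 1 (INR k)).
          - assert (INR k * y <= INR k ^ 2 * y) by (simpl; apply Rmult_le_compat_r; nra). assert (INR k * y < 1) by lra. nra.
          - assert (INR k = 0).
            { destruct k; [reflexivity|]. rewrite S_INR in r. pose proof (pos_INR k). lra. }
            rewrite H, !Rmult_0_l; lra. }
        simpl. nra. }
      nra. }
    split.
    + assert (INR N < INR k); [|apply INR_lt in H; nia].
      assert (INR (S N) < INR k + 1); [|rewrite S_INR in H; lra].
      destruct (Rlt_or_le (INR (S N)) (INR k + 1)) as [|Hc]; auto.
      exfalso. assert ((INR k + 1) ^ 2 * y < INR (S N) * INR (S N) * eps) .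
      { assert (0 <= INR k + 1) by lra. assert (0 < (INR k + 1) ^ 2) by (apply pow_lt; lra).
        assert ((INR k + 1) ^ 2 <= INR (S N) * INR (S N)) by (replace ((INR k + 1) ^ 2) with ((INR k + 1) * (INR k + 1)) by ring; apply Rmult_le_compat; lra). nra. }
      lra.
    + rewrite mult_INR, mult_IZR, <- INR_IZR_INZ, mult_INR.
      replace ((INR k * INR m) ^ 2 * x - INR k * INR k * IZR z0) with (INR k ^ 2 * y)
        by (unfold y; ring).
      split; [|auto].
      unfold h in Hbd. simpl in *. nra.
  - set (e := - y). assert (He : 0 < e) by (unfold e; lra).
    destruct (cross_sq e He) as [k [A B]].
    exists (S k * m)%nat, (Z.of_nat (S k * S k) * z0 - 2)%Z.
    assert (Hk : 0 <= INR k) by apply pos_INR.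
    assert (Hne : INR (S k) ^ 2 * e <> 1).
    { intro E. apply (Hirr (Z.of_nat (S k * S k * (m * m))) (Z.of_nat (S k * S k) * z0 - 1)%Z). lia.
      rewrite <- INR_IZR_INZ, minus_IZR, mult_IZR, <- INR_IZR_INZ.
      rewrite !mult_INR. unfold e, y in E. simpl in *. lra. }
    rewrite S_INR in B, Hne.
    assert (Hbd : (2 * INR k + 1) * e < h).
    { assert (((2 * INR k + 1) * e) ^ 2 < 9 * e).
      { assert (INR k * e * e <= e).
        { destruct (Rle_lt_dec 1 (INR k)).
          - assert (INR k * e <= INR k ^ 2 * e) by (simpl; apply Rmult_le_compat_r; nra). assert (INR k * e < 1) by lra. nra.
          - assert (INR k = 0).
            { destruct k; [reflexivity|]. rewrite S_INR in r. pose proof (pos_INR k). lra. }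
            rewrite H, !Rmult_0_l; lra. }
        assert (e < 1) by (unfold e; assert (h * h <= 1) by nra; lra). simpl. nra. }
      unfold e in *. nra. }
    split.
    + assert (INR N < INR (S k)); [|apply INR_lt in H; nia].
      rewrite S_INR.
      destruct (Rlt_or_le (INR (S N)) (INR k + 1)) as [|Hc]; [rewrite S_INR in *; lra|].
      exfalso. assert ((INR k + 1) ^ 2 * e < INR (S N) * INR (S N) * eps) .
      { assert (0 <= INR k + 1) by lra. assert (0 < (INR k + 1) ^ 2) by (apply pow_lt; lra).
        assert ((INR k + 1) ^ 2 <= INR (S N) * INR (S N)) by (replace ((INR k + 1) ^ 2) with ((INR k + 1) * (INR k + 1)) by ring; apply Rmult_le_compat; lra).
        unfold e in *. nra. }
      unfold e in *. nra.
    + rewrite mult_INR, minus_IZR, mult_IZR, <- INR_IZR_INZ, mult_INR, S_INR.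
      replace ((INR k + 1) * INR m) with (INR m * (INR k + 1)) by ring.
      replace ((INR m * (INR k + 1)) ^ 2 * x - (INR (S k) * INR (S k) * IZR z0 - IZR 2))
        with (2 - (INR k + 1) ^ 2 * e) by (unfold e, y; rewrite S_INR; simpl; ring).
      assert ((INR k + 1) ^ 2 * e = INR k ^ 2 * e + (2 * INR k + 1) * e) by ring.
      assert (1 < (INR k + 1) ^ 2 * e) by (destruct B as [B|B]; [exact B|exfalso; apply Hne; symmetry; exact B]).
      unfold h in Hbd.
      replace ((INR m * (INR k + 1)) ^ 2 * x - ((INR k + 1) * (INR k + 1) * IZR z0 - 2)) with (2 - (INR k + 1) ^ 2 * e) by (unfold e, y; ring). lra.
Qed.

Ltac Req := match goal with |- ?a = ?b => change (@eq R a b) end.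

Lemma sum_Sn_R : forall (a : nat -> R) n, sum_n a (S n) = sum_n a n + a (S n).
Proof. intros. rewrite sum_Sn. reflexivity. Qed.

Lemma incr_mono : forall (np : nat -> nat), (forall p, (np p < np (S p))%nat) ->
  forall p q, (p < q)%nat -> (np p < np q)%nat.
Proof. intros np H p q Hpq. induction Hpq; [apply H|]. specialize (H m). lia. Qed.

Lemma incr_ge : forall (np : nat -> nat), (forall p, (np p < np (S p))%nat) ->
  forall p, (p <= np p)%nat.
Proof. intros np H p. induction p; [lia|]. specialize (H p). lia. Qed.

Lemma incr_inj : forall (np : nat -> nat), (forall p, (np p < np (S p))%nat) ->
  forall p q, np p = np q -> p = q.
Proof. intros np H p q E. destruct (Nat.lt_trichotomy p q) as [h|[h|h]]; auto;
  apply (incr_mono np H) in h; lia. Qed.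

Lemma sum_mono : forall a : nat -> R, (forall n, 0 <= a n) ->
  forall N M, (N <= M)%nat -> sum_n a N <= sum_n a M.
Proof. intros a Ha N M H. induction H; [lra|]. rewrite sum_Sn_R. specialize (Ha (S m)). lra. Qed.


Lemma sparse_sum (np : nat -> nat) (gam g : nat -> R)
  (Hinc : forall p, (np p < np (S p))%nat)
  (Hon : forall p, gam (np p) = g p)
  (Hoff : forall n, (forall p, n <> np p) -> gam n = 0) : forall (F : nat -> R) p,
  sum_n (fun n => F n * gam n) (np p) = sum_n (fun r => F (np r) * g r) p.
Proof.
  intros F.
  assert (Hbefore : forall k, (k < np 0%nat)%nat -> sum_n (fun n => F n * gam n) k = 0).
  { induction k; intro Hk.
    - rewrite sum_O. replace (gam 0%nat) with 0; [Req; ring|symmetry; apply Hoff].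
      intros p E. pose proof (incr_ge np Hinc p). destruct p; [lia|].
      pose proof (incr_mono np Hinc 0 (S p)). lia.
    - rewrite sum_Sn_R, IHk by lia. replace (gam (S k)) with 0; [Req; ring|symmetry; apply Hoff].
      intros p E. destruct p; [lia|]. pose proof (incr_mono np Hinc 0 (S p)). lia. }
  assert (Hgap : forall p k, (np p + k < np (S p))%nat ->
     sum_n (fun n => F n * gam n) (np p + k) = sum_n (fun n => F n * gam n) (np p)).
  { intros p k. induction k; intro Hk.
    - rewrite Nat.add_0_r. reflexivity.
    - rewrite Nat.add_succ_r, sum_Sn_R, IHk by lia. replace (gam (S (np p + k))) with 0; [Req; ring|symmetry; apply Hoff].
      intros q E. destruct (Nat.lt_trichotomy q p) as [h|[h|h]].
      + pose proof (incr_mono np Hinc q p h). lia.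
      + subst. lia.
      + destruct (Nat.eq_dec q (S p)) as [e|e]; [subst; lia|].
        pose proof (incr_mono np Hinc (S p) q ltac:(lia)). lia. }
  induction p.
  - assert (H0 : sum_n (fun n => F n * gam n) (np 0%nat) = F (np 0%nat) * gam (np 0%nat)).
    { destruct (np 0%nat) as [|k] eqn:E0.
      - rewrite sum_O; reflexivity.
      - rewrite sum_Sn_R, Hbefore by lia. Req; ring. }
    rewrite H0, sum_O, Hon. reflexivity.
  - rewrite sum_Sn_R, <- IHp.
    pose proof (Hinc p).
    replace (np (S p)) with (S (np p + (np (S p) - np p - 1))) by lia.
    rewrite sum_Sn_R, Hgap by lia.
    replace (S (np p + (np (S p) - np p - 1))) with (np (S p)) by lia.
    rewrite Hon. reflexivity.
Qed.

Lemma sparse_bound (np : nat -> nat) (gam g : nat -> R)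
  (Hinc : forall p, (np p < np (S p))%nat)
  (Hon : forall p, gam (np p) = g p)
  (Hoff : forall n, (forall p, n <> np p) -> gam n = 0) : forall (F : nat -> R), (forall n, 0 <= F n * gam n) ->
  forall N, sum_n (fun n => F n * gam n) N <= sum_n (fun r => F (np r) * g r) N.
Proof.
  intros F HF N. rewrite <- (sparse_sum np gam g Hinc Hon Hoff). apply sum_mono; auto. apply incr_ge; auto.
Qed.

Record St := mkSt { sn : nat; sw : R; st : R }.
Definition Inv (b : R) (s : St) := (1 <= sn s)%nat /\ 0 < sw s < 1 /\ 0 < st s /\
  exists z : Z, INR (sn s) ^ 2 * / b - IZR z = sw s.
Definition Spec (b : R) (s s' : St) := Inv b s' /\ (sn s < sn s')%nat /\ sw s < sw s' /\
  st s' = b * (sw s' - sw s) / (2 * (INR (sn s') - INR (sn s))) /\ st s' <= st s / 2 /\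
  4 / b <= INR (sn s') ^ 2 * (sw s' - sw s).
Definition Hyp b := 0 < b /\ forall q p : Z, q <> 0%Z -> IZR q * / b <> IZR p.

Lemma step_ex (b : R) : forall s, exists s', Hyp b -> Inv b s -> Spec b s s'.
Proof.
  intros [n w t].
  destruct (classic (Hyp b /\ Inv b (mkSt n w t))) as [[Hb HI]|Hn];
    [|exists (mkSt n w t); intros; exfalso; tauto].
  destruct Hb as [hb Hirr]. destruct HI as [Hn1 [Hw [Ht _]]]. simpl in *.
  destruct (INR_unbounded (b / t + 8 / (b * (1 - w)))) as [M HM].
  destruct (Key (/ b) Hirr ((1 + w) / 2) (n + M)%nat ltac:(lra)) as [n' [z [Hn' Hw']]].
  set (w' := INR n' ^ 2 * / b - IZR z) in *.
  assert (HnM : INR n + INR M < INR n') by (rewrite <- plus_INR; apply lt_INR; lia).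
  assert (Hn0 : 0 <= INR n) by apply pos_INR.
  set (d := INR n' - INR n).
  assert (Hd : INR M < d) by (unfold d; lra).
  assert (Hbt : 0 < b / t) by (apply Rdiv_lt_0_compat; lra).
  assert (H8 : 0 < 8 / (b * (1 - w))) by (apply Rdiv_lt_0_compat; nra).
  exists (mkSt n' w' (b * (w' - w) / (2 * d))). intros _ _.
  unfold Spec, Inv; simpl.
  assert (Hdp : 0 < d) by lra.
  assert (Hwp : 0 < w' - w) by lra.
  repeat split.
  - lia.
  - lra.
  - lra.
  - apply Rdiv_lt_0_compat; nra.
  - exists z. reflexivity.
  - lia.
  - lra.
  -
    assert (E1 : b / t < d) by lra.
    assert (E2 : b < d * t).
    { apply (Rmult_lt_compat_r t) in E1; [|lra]. unfold Rdiv in E1.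
      rewrite Rmult_assoc, Rinv_l, Rmult_1_r in E1 by lra. lra. }
    apply (Rmult_le_reg_r (2 * d)); [lra|].
    unfold Rdiv. rewrite Rmult_assoc, Rinv_l, Rmult_1_r by lra. nra.
  -
    assert (E1 : 8 / (b * (1 - w)) < INR n') by lra.
    assert (E2 : 8 < INR n' * (b * (1 - w))).
    { apply (Rmult_lt_compat_r (b * (1 - w))) in E1; [|nra]. unfold Rdiv in E1.
      rewrite Rmult_assoc, Rinv_l, Rmult_1_r in E1 by nra. lra. }
    assert (Hn'1 : 1 <= INR n') by (apply (le_INR 1); lia).
    apply (Rmult_le_reg_r b); [lra|].
    unfold Rdiv. rewrite Rmult_assoc, Rinv_l, Rmult_1_r by lra.
    assert (INR n' <= INR n' ^ 2) by (simpl; nra).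
    assert (2 * (w' - w) > 1 - w) by lra.
    assert (INR n' * (w' - w) * b <= INR n' ^ 2 * (w' - w) * b).
    { apply Rmult_le_compat_r; [lra|]. apply Rmult_le_compat_r; lra. }
    assert (INR n' * (b * (1 - w)) < INR n' * (w' - w) * b * 2).
    { replace (INR n' * (w' - w) * b * 2) with (INR n' * b * (2 * (w' - w))) by ring.
      replace (INR n' * (b * (1 - w))) with (INR n' * b * (1 - w)) by ring.
      apply Rmult_lt_compat_l; [nra|lra]. }
    lra.
Qed.

Lemma trig_periodZ : forall x z, cos (x + 2 * IZR z * PI) = cos x /\ sin (x + 2 * IZR z * PI) = sin x.
Proof.
  intros x z. destruct z as [|p|p].
  - simpl. replace (x + 2 * 0 * PI) with x by ring. auto.
  - rewrite <- (positive_nat_Z p), <- INR_IZR_INZ. split; [apply cos_period|apply sin_period].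
  - assert (E : IZR (Z.neg p) = - INR (Pos.to_nat p)).
    { rewrite <- Pos2Z.opp_pos, opp_IZR, <- (positive_nat_Z p), <- INR_IZR_INZ. reflexivity. }
    rewrite E.
    set (y := x + 2 * - INR (Pos.to_nat p) * PI).
    split.
    + rewrite <- (cos_period y (Pos.to_nat p)). f_equal. unfold y; ring.
    + rewrite <- (sin_period y (Pos.to_nat p)). f_equal. unfold y; ring.
Qed.

Lemma omega_ext : forall f h : nat -> R, (forall n, (1 <= n)%nat -> f n = h n) ->
  forall n, omega f n = omega h n.
Proof.
  intros f h H n. unfold omega.
  rewrite (sum_n_m_ext_loc (fun k => INR k * f k) (fun k => INR k * h k)).
  - rewrite (Series_ext (fun j => f (n + 1 + j)%nat) (fun j => h (n + 1 + j)%nat)); auto.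
    intro j. apply H. lia.
  - intros k Hk. rewrite H by lia. reflexivity.
Qed.

Lemma omega_0 : forall f, omega f 0 = 0.
Proof.
  intros f. unfold omega. rewrite sum_n_m_zero by lia. simpl. change (@zero R_AbelianMonoid) with 0. ring.
Qed.

Lemma act_sqrt : forall y, 0 <= y -> (Cmod (sqrt y, 0)) ^ 2 = y.
Proof.
  intros y Hy. unfold Cmod. simpl fst; simpl snd.
  rewrite pow2_sqrt.
  - replace (0 ^ 2) with 0 by ring. rewrite Rplus_0_r. apply pow2_sqrt; auto.
  - apply Rplus_le_le_0_compat; apply pow2_ge_0.
Qed.

Lemma main_from_seq (b : R) (np : nat -> nat) (w t : nat -> R) :
  0 < b ->
  (1 <= np 0)%nat -> (forall p, (np p < np (S p))%nat) ->
  (forall p, 0 < w p < 1) ->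
  (forall p, exists z : Z, INR (np p) ^ 2 * / b - IZR z = w p) ->
  (forall p, 0 < t p) -> (forall p, t (S p) <= t p / 2) ->
  t 0%nat = b * w 0%nat / (2 * INR (np 0%nat)) ->
  (forall p, t (S p) = b * (w (S p) - w p) / (2 * (INR (np (S p)) - INR (np p)))) ->
  (forall p, 4 / b <= INR (np (S p)) ^ 2 * (w (S p) - w p)) ->
  exists (np : nat -> nat) (gamma : nat -> R),
    (1 <= np 0)%nat /\
    (forall p : nat, (np p < np (S p))%nat) /\
    (forall p : nat, 0 < gamma (np p)) /\
    (forall n : nat, (forall p : nat, n <> np p) -> gamma n = 0) /\
    ex_series (fun n => INR n * gamma n) /\
    is_lim_seq (sum_n (fun p => INR (np p) ^ 3 * gamma (np p))) p_infty /\
    (forall p : nat, exists z : Z, omega gamma (np p) = b * IZR z) /\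
    (exists zeta : nat -> C, Iso gamma zeta) /\
    (forall zeta : nat -> C, Iso gamma zeta ->
       ~ in_h_3half zeta /\
       (forall (t : R) (n : nat), BO_flow zeta (t + 2 * PI / b) n = BO_flow zeta t n) /\
       ~ finite_gap zeta).
Proof.
  intros hb Hn0 Hinc Hw Hz Ht Ht2 Ht0 HtS H4.
  set (g := fun p => t p - t (S p)).
  assert (Hg : forall p, 0 < g p) by (intro p; unfold g; specialize (Ht2 p); specialize (Ht p); lra).
  set (gamma := fun n => match excluded_middle_informative (exists p, np p = n) with
     | left H => g (proj1_sig (constructive_indefinite_description _ H))
     | right _ => 0 end).
  assert (Gon : forall p, gamma (np p) = g p).
  { intro p. unfold gamma. destruct (excluded_middle_informative _) as [H|H].
    - destruct (constructive_indefinite_description _ H) as [q Hq]. simpl.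
      apply (incr_inj np Hinc) in Hq. subst; auto.
    - exfalso. apply H. exists p; auto. }
  assert (Goff : forall n, (forall p, n <> np p) -> gamma n = 0).
  { intros n Hn. unfold gamma. destruct (excluded_middle_informative _) as [H|H]; auto.
    destruct H as [p Hp]. exfalso. apply (Hn p). auto. }
  assert (Gpos : forall n, 0 <= gamma n).
  { intro n. destruct (classic (exists p, np p = n)) as [[p Hp]|H].
    - subst. rewrite Gon. left; auto.
    - rewrite Goff; [lra|]. intros p E. apply H. exists p; auto. }
  assert (Hnp1 : forall p, 1 <= INR (np p)).
  { intro p. apply (le_INR 1). destruct p; [lia|]. pose proof (incr_mono np Hinc 0 (S p)). lia. }
  assert (G3 : forall p, sum_n g p = t 0%nat - t (S p)).
  { induction p. - rewrite sum_O. reflexivity.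
    - rewrite sum_Sn_R, IHp. unfold g. Req; ring. }
  assert (G4 : forall p, sum_n (fun r => INR (np r) * g r) p = b * w p / 2 - INR (np p) * t (S p)).
  { induction p.
    - rewrite sum_O. unfold g. rewrite Ht0. Req. field. specialize (Hnp1 0%nat). lra.
    - rewrite sum_Sn_R, IHp. unfold g. rewrite (HtS p).
      pose proof (Hinc p) as Hi. apply lt_INR in Hi. Req. field. lra. }
  assert (G5 : is_lim_seq t 0).
  { apply (is_lim_seq_le_le (fun _ => 0) t (fun p => t 0%nat * (/2) ^ p)).
    - intro p. split; [left; auto|]. induction p; [simpl; lra|].
      specialize (Ht2 p). simpl. lra.
    - apply is_lim_seq_const.
    - replace (Finite 0) with (Finite (t 0%nat * 0)) by (f_equal; ring).
      apply (is_lim_seq_mult' (fun _ => t 0%nat) (fun p => (/2) ^ p)); [apply is_lim_seq_const|]. apply is_lim_seq_geom. rewrite Rabs_right; lra. }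
  assert (G6 : forall q, 1 <= INR (np (S q)) ^ 3 * g (S q)).
  { intro q. unfold g. specialize (Ht2 (S q)). rewrite (HtS q) in *.
    specialize (H4 q). specialize (Hw q) as Hwq. specialize (Hw (S q)) as Hwq'.
    pose proof (Hinc q) as Hi. apply lt_INR in Hi. pose proof (pos_INR (np q)).
    set (n' := INR (np (S q))) in *. set (n := INR (np q)) in *.
    set (T := b * (w (S q) - w q) / (2 * (n' - n))) in *.
    assert (HT : n' ^ 3 * T >= n' ^ 2 * (b * (w (S q) - w q)) / 2).
    { unfold T. unfold Rdiv.
      assert (0 < n' - n) by lra.
      assert (n' - n <= n') by lra.
      assert (0 < b * (w (S q) - w q)).
      { assert (0 < 4 / b) by (apply Rdiv_lt_0_compat; lra).
        assert (0 < n' ^ 2 * (w (S q) - w q)) by lra.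
        assert (0 < n' ^ 2) by (apply pow_lt; lra). 
        apply Rmult_lt_0_compat; [lra|]. nra. }
      apply Rle_ge.
      replace (n' ^ 3 * (b * (w (S q) - w q) * / (2 * (n' - n))))
        with ((n' ^ 2 * (b * (w (S q) - w q))) * (n' / (n' - n)) * / 2) by (field; lra).
      replace (n' ^ 2 * (b * (w (S q) - w q)) * / 2)
        with ((n' ^ 2 * (b * (w (S q) - w q))) * 1 * / 2) by ring.
      apply Rmult_le_compat_r; [lra|]. apply Rmult_le_compat_l.
      - assert (0 < n' ^ 2) by (apply pow_lt; lra). nra.
      - apply (Rmult_le_reg_r (n' - n)); [lra|]. unfold Rdiv. rewrite Rmult_assoc, Rinv_l by lra. lra. }
    assert (H4' : 4 <= n' ^ 2 * (b * (w (S q) - w q))).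
    { apply (Rmult_le_compat_r b) in H4; [|lra]. unfold Rdiv in H4.
      rewrite Rmult_assoc, Rinv_l in H4 by lra. lra. }
    assert (0 < t (S (S q))) by apply Ht.
    assert (n' ^ 3 * (T - t (S (S q))) >= n' ^ 3 * T / 2).
    { assert (0 < n' ^ 3) by (apply pow_lt; lra). nra. }
    lra. }

  assert (Hexs : ex_series (fun n => INR n * gamma n)).
  { destruct (ex_finite_lim_seq_incr (sum_n (fun n => INR n * gamma n)) (b / 2)) as [l Hl].
    - intro n. rewrite sum_Sn_R.
      assert (0 <= INR (S n) * gamma (S n)) by (apply Rmult_le_pos; [apply pos_INR|auto]). lra.
    - intro N. eapply Rle_trans.
      + apply (sparse_bound np gamma g Hinc Gon Goff INR).
        intro; apply Rmult_le_pos; [apply pos_INR|auto].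
      + rewrite G4. specialize (Hw N). pose proof (Ht (S N)). pose proof (Hnp1 N). nra.
    - exists l. exact Hl. }
  assert (Hge : forall p, INR p <= sum_n (fun r => INR (np r) ^ 3 * g r) p).
  { induction p.
    - rewrite sum_O. simpl. specialize (Hnp1 0%nat). specialize (Hg 0%nat).
      assert (0 < INR (np 0%nat) ^ 3) by (apply pow_lt; lra). nra.
    - rewrite sum_Sn_R, S_INR. specialize (G6 p). lra. }
  assert (SG : forall p, sum_n gamma (np p) = t 0%nat - t (S p)).
  { intro p. rewrite (@sum_n_ext R_AbelianMonoid gamma (fun n => (fun _ => 1) n * gamma n)) by (intro; simpl; Req; ring).
    rewrite (sparse_sum np gamma g Hinc Gon Goff). rewrite <- G3.
    apply sum_n_ext. intro; Req; ring. }
  assert (Hser : is_series gamma (t 0%nat)).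
  { destruct (ex_finite_lim_seq_incr (sum_n gamma) (t 0%nat)) as [l Hl].
    - intro n. rewrite sum_Sn_R. specialize (Gpos (S n)). lra.
    - intro N. apply (Rle_trans _ (sum_n gamma (np N))).
      + apply sum_mono; auto. apply incr_ge; auto.
      + rewrite SG. specialize (Ht (S N)). lra.
    - assert (L1 : is_lim_seq (fun p => sum_n gamma (np p)) l).
      { apply (is_lim_seq_subseq (sum_n gamma) l np); auto. apply eventually_subseq; auto. }
      assert (L2 : is_lim_seq (fun p => sum_n gamma (np p)) (t 0%nat - 0)).
      { apply (is_lim_seq_ext (fun p => t 0%nat - t (S p))).
        - intro p; rewrite SG; auto.
        - apply is_lim_seq_minus'; [apply is_lim_seq_const|].
          apply (is_lim_seq_incr_1 t 0). auto. }
      apply is_lim_seq_unique in L1. apply is_lim_seq_unique in L2.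
      rewrite L1 in L2. injection L2 as E. rewrite Rminus_0_r in E. subst l. exact Hl. }
  assert (Homega : forall p, exists z : Z, omega gamma (np p) = b * IZR z).
  { intro p. destruct (Hz p) as [z Hzp]. exists z.
    assert (Htail : is_series (fun k => gamma (np p + 1 + k)%nat) (t (S p))).
    { apply is_series_incr_n; [lia|].
      replace (Init.Nat.pred (np p + 1)) with (np p) by lia. rewrite SG.
      change (plus (t (S p)) (t 0%nat - t (S p))) with (t (S p) + (t 0%nat - t (S p))).
      replace (t (S p) + (t 0%nat - t (S p))) with (t 0%nat) by ring. exact Hser. }
    assert (Hsum : sum_n_m (fun k => INR k * gamma k) 1 (np p) = b * w p / 2 - INR (np p) * t (S p)).
    { assert (E : sum_n_m (fun k => INR k * gamma k) 1 (np p) =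
         sum_n (fun k => INR k * gamma k) (np p) - sum_n (fun k => INR k * gamma k) 0)
        by (exact (sum_n_m_sum_n (fun k => INR k * gamma k) 0 (np p) ltac:(lia))).
      rewrite E, (sparse_sum np gamma g Hinc Gon Goff INR p), G4, sum_O.
      simpl. Req. ring. }
    unfold omega. rewrite Hsum, (is_series_unique _ _ Htail).
    rewrite <- Hzp. field. lra. }
  exists np, gamma.
  split; [auto|]. split; [auto|]. split; [intro p; rewrite Gon; auto|]. split; [auto|].
  split; [auto|]. split.
  { apply (is_lim_seq_ext (sum_n (fun r => INR (np r) ^ 3 * g r))).
    - intro p. apply sum_n_ext. intro r. rewrite Gon. reflexivity.
    - apply (is_lim_seq_le_p_loc INR); [|apply is_lim_seq_INR].
      exists 0%nat. intros n _. apply Hge. }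
  split; [auto|]. split.
  { exists (fun n => (sqrt (gamma n), 0)). split.
    - unfold in_h_half. apply (ex_series_ext (fun n => INR n * gamma n)); auto.
      intro n. unfold actions. rewrite act_sqrt; auto.
    - intros n _. unfold actions. apply act_sqrt; auto. }
  intros zeta [Hh Hact].
  split; [|split].
  - intro H. unfold in_h_3half in H.
    apply (ex_series_ext _ (fun n => INR n ^ 3 * gamma n)) in H.
    2:{ intro n. destruct n; [simpl; ring|]. rewrite Hact by lia. reflexivity. }
    destruct H as [l Hl].
    assert (Hb : forall N, sum_n (fun n => INR n ^ 3 * gamma n) N <= l).
    { apply is_lim_seq_incr_compare; [exact Hl|].
      intro n. rewrite sum_Sn_R. assert (0 <= INR (S n) ^ 3 * gamma (S n)).
      { apply Rmult_le_pos; auto. apply pow_le, pos_INR. } lra. }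
    destruct (INR_unbounded l) as [p Hp].
    specialize (Hge p). specialize (Hb (np p)).
    rewrite (sparse_sum np gamma g Hinc Gon Goff (fun n => INR n ^ 3) p) in Hb.
    lra.
  - intros tt n.
    assert (C : zeta n = 0%C \/ exists z : Z, omega (actions zeta) n = b * IZR z).
    { destruct n as [|n].
      - right. exists 0%Z. rewrite omega_0. simpl; ring.
      - destruct (classic (exists p, np p = S n)) as [[p Hp]|Hno].
        + right. rewrite (omega_ext (actions zeta) gamma) by (intros; apply Hact; lia).
          rewrite <- Hp. apply Homega.
        + left. apply Cmod_eq_0.
          assert (E : actions zeta (S n) = 0).
          { rewrite Hact by lia. apply Goff. intros p E. apply Hno. exists p; auto. }
          unfold actions in E. destruct (Req_dec (Cmod (zeta (S n))) 0) as [|Hne]; auto.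
          exfalso. apply (pow_nonzero _ 2 Hne E). }
    destruct C as [C|[z Cz]].
    + unfold BO_flow. rewrite C, !Cmult_0_r. reflexivity.
    + unfold BO_flow. rewrite Cz.
      replace (b * IZR z * (tt + 2 * PI / b)) with (b * IZR z * tt + 2 * IZR z * PI) by (field; lra).
      destruct (trig_periodZ (b * IZR z * tt) z) as [E1 E2]. rewrite E1, E2. reflexivity.
  - intros [N HN]. specialize (HN (np N) (incr_ge np Hinc N)).
    assert (E : actions zeta (np N) = g N).
    { rewrite Hact, Gon; auto. specialize (Hnp1 N). apply INR_le. simpl. lra. }
    unfold actions in E. rewrite HN, Cmod_0 in E. specialize (Hg N). simpl in E. lra.
Qed.

Theorem theorem3p1 (b : R) (hb : 0 < b) (hirr : irrational b) :
  exists (np : nat -> nat) (gamma : nat -> R),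
    (1 <= np 0)%nat /\
    (forall p : nat, (np p < np (S p))%nat) /\
    (forall p : nat, 0 < gamma (np p)) /\
    (forall n : nat, (forall p : nat, n <> np p) -> gamma n = 0) /\
    ex_series (fun n => INR n * gamma n) /\
    is_lim_seq (sum_n (fun p => INR (np p) ^ 3 * gamma (np p))) p_infty /\
    (forall p : nat, exists z : Z, omega gamma (np p) = b * IZR z) /\
    (* consequences, in Birkhoff coordinates *)
    (exists zeta : nat -> C, Iso gamma zeta) /\
    (forall zeta : nat -> C, Iso gamma zeta ->
       ~ in_h_3half zeta /\
       (forall (t : R) (n : nat), BO_flow zeta (t + 2 * PI / b) n = BO_flow zeta t n) /\
       ~ finite_gap zeta).
Proof.
  assert (Hyb : Hyp b).
  { split; auto. intros q p Hq E. apply hirr.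
    destruct (Z.eq_dec p 0) as [Hp|Hp].
    - subst p. exfalso. simpl in E. apply Rmult_integral in E. destruct E as [E|E].
      + apply Hq. apply eq_IZR. exact E.
      + apply Rinv_neq_0_compat in E; auto. lra.
    - exists q, p. split; auto. assert (IZR p <> 0) by (apply not_0_IZR; auto).
      assert (IZR q <> 0) by (apply not_0_IZR; auto). rewrite <- E. field. split; auto; lra. }
  destruct (Key (/ b) (proj2 Hyb) 0 0 ltac:(lra)) as [n0 [z0 [Hn0 Hw0]]].
  set (w0 := INR n0 ^ 2 * / b - IZR z0) in *.
  assert (Hn0R : 0 < INR n0) by (apply lt_0_INR; lia).
  set (s0 := mkSt n0 w0 (b * w0 / (2 * INR n0))).
  assert (HI0 : Inv b s0).
  { unfold Inv, s0; simpl. repeat split; try lia; try lra.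
    - apply Rdiv_lt_0_compat; nra.
    - exists z0. reflexivity. }
  set (stepf := fun s => proj1_sig (constructive_indefinite_description _ (step_ex b s))).
  assert (Hstep : forall s, Inv b s -> Spec b s (stepf s)).
  { intros s Hs. unfold stepf. destruct (constructive_indefinite_description _ _) as [s' Hs']. simpl. auto. }
  set (sq := fun p => nat_rect (fun _ => St) s0 (fun _ s => stepf s) p).
  assert (HsqS : forall p, sq (S p) = stepf (sq p)) by reflexivity.
  assert (HInv : forall p, Inv b (sq p)).
  { induction p; [exact HI0|]. rewrite HsqS. apply Hstep; auto. }
  assert (HSp : forall p, Spec b (sq p) (sq (S p))).
  { intro p. rewrite HsqS. apply Hstep, HInv. }
  apply (main_from_seq b (fun p => sn (sq p)) (fun p => sw (sq p)) (fun p => st (sq p))); auto.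
  all: try (intro p; destruct (HSp p) as (A1 & A2 & A3 & A4 & A5 & A6);
            destruct (HInv p) as (B1 & B2 & B3 & B4); solve [auto]).
Qed.
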